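(* Let $(Z,\mathbb{Z}^k,S)$ be an aperiodic zero-dimensional system. For every $R>0$ there is $L_0>0$ such that for every positive integer $L\ge L_0$ and every clopen $U\subset Z$ with $Z=\bigcup_{|n|<L}S^nU$ and $U\cap S^nU=\emptyset$ for $0<|n|<L$, the following holds: for every $x\in Z$ and every $n\in C(x)$, \[\frac{|\partial^{\mathbb{Z}}_RV^{\mathbb{Z}}(x,n)|}{|V^{\mathbb{Z}}(x,n)|}<\frac1R.\]
   Context: Given such $L$ and $U$: $C(x)=\{n\in\mathbb{Z}^k: S^nx\in U\}$; for $n\in C(x)$, $V(x,n)=\{u\in\mathbb{R}^k:|u-n|\le|u-m|\ \forall m\in C(x)\}$ (Euclidean norm) and $V^{\mathbb{Z}}(x,n)=V(x,n)\cap\mathbb{Z}^k$. For $\Omega\subset\mathbb{Z}^k$ and $R>0$, $\partial^{\mathbb{Z}}_R\Omega$ is the set of $n\in\mathbb{Z}^k$ for which there exist $m\in\Omega$ and $m'\in\mathbb{Z}^k\setminus\Omega$ with $|n-m|\le R$ and $|n-m'|\le R$. Aperiodic: the action is free; zero-dimensional: clopen sets form a basis. *)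

(* Defs.v *)
From HB Require Import structures.
From mathcomp Require Import all_boot all_order all_algebra.
From mathcomp Require Import all_classical all_reals.
From mathcomp Require Import finmap topology.
Set Implicit Arguments. Unset Strict Implicit. Unset Printing Implicit Defensive.
Import Order.TTheory GRing.Theory Num.Theory.
Local Open Scope classical_set_scope.
Local Open Scope ring_scope.

Notation Zk k := 'rV[int]_k.

Definition toR {R : realType} {k : nat} (n : Zk k) : 'rV[R]_k := map_mx intr n.

Definition enorm {R : realType} {k : nat} (u : 'rV[R]_k) : R :=
  Num.sqrt (\sum_(i < k) u 0 i ^+ 2).

Definition znorm {R : realType} {k : nat} (n : Zk k) : R := enorm (toR n).

Definition is_action {k : nat} {Z : topologicalType} (S : Zk k -> Z -> Z) :=
  (forall x, S 0 x = x) /\ (forall m n x, S (m + n) x = S m (S n x)) /\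
  (forall n, continuous (S n)).

(* aperiodic: the action is free *)
Definition free_action {k : nat} {Z : Type} (S : Zk k -> Z -> Z) :=
  forall n x, S n x = x -> n = 0.

Definition zero_dim (Z : topologicalType) :=
  forall (x : Z) (A : set Z), open A -> A x ->
    exists B : set Z, clopen B /\ B x /\ B `<=` A.

Definition Cset {k : nat} {Z : Type} (S : Zk k -> Z -> Z) (U : set Z) (x : Z)
  : set (Zk k) := [set n | U (S n x)].

Definition Vcell {R : realType} {k : nat} {Z : Type} (S : Zk k -> Z -> Z)
  (U : set Z) (x : Z) (n : Zk k) : set 'rV[R]_k :=
  [set u | forall m, Cset S U x m -> enorm (u - toR n) <= enorm (u - toR m)].

Definition VcellZ (R : realType) {k : nat} {Z : Type} (S : Zk k -> Z -> Z)
  (U : set Z) (x : Z) (n : Zk k) : set (Zk k) :=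
  [set m | Vcell (R:=R) S U x n (toR m)].

Definition bdryZ {R : realType} {k : nat} (r : R) (Om : set (Zk k)) : set (Zk k) :=
  [set n | (exists m, Om m /\ znorm (n - m) <= r) /\
           (exists m', ~ Om m' /\ znorm (n - m') <= r)].

(* Main.v *)
Require Import Defs.
From HB Require Import structures.
From mathcomp Require Import all_boot all_order all_algebra.
From mathcomp Require Import all_classical all_reals.
From mathcomp Require Import finmap topology.
From mathcomp Require Import ring lra zify.
Import Order.TTheory GRing.Theory Num.Theory.
Local Open Scope classical_set_scope.
Local Open Scope ring_scope.
Definition sqz {k : nat} (v : Zk k) : int := \sum_(i < k) v 0 i ^+ 2.
Definition dotz {k : nat} (u v : Zk k) : int := \sum_(i < k) u 0 i * v 0 i.

Lemma sqz_ge0 {k} (v : Zk k) : 0 <= sqz v.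
Proof. by apply: sumr_ge0 => i _; rewrite sqr_ge0. Qed.

Lemma sqz_coord {k} (v : Zk k) i : v 0 i ^+ 2 <= sqz v.
Proof.
rewrite /sqz (bigD1 i) //= lerDl; apply: sumr_ge0 => j _; exact: sqr_ge0.
Qed.

Lemma sqz_eq0 {k} (v : Zk k) : sqz v = 0 -> v = 0.
Proof.
move=> h; apply/rowP => i; rewrite mxE; apply/eqP.
have := sqz_coord v i; rewrite h -sqrf_eq0 => H.
by rewrite eq_le H sqr_ge0.
Qed.

Lemma dotzC {k} (u v : Zk k) : dotz u v = dotz v u.
Proof. by apply: eq_bigr => i _; rewrite mulrC. Qed.

Lemma dotzDl {k} (u v w : Zk k) : dotz (u + v) w = dotz u w + dotz v w.
Proof. by rewrite /dotz -big_split; apply: eq_bigr => i _; rewrite !mxE mulrDl. Qed.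

Lemma dotzNl {k} (u w : Zk k) : dotz (- u) w = - dotz u w.
Proof. by rewrite /dotz -sumrN; apply: eq_bigr => i _; rewrite !mxE mulNr. Qed.

Lemma dotzBl {k} (u v w : Zk k) : dotz (u - v) w = dotz u w - dotz v w.
Proof. by rewrite dotzDl dotzNl. Qed.

Lemma dotzZl {k} a (u w : Zk k) : dotz (a *: u) w = a * dotz u w.
Proof. by rewrite /dotz mulr_sumr; apply: eq_bigr => i _; rewrite !mxE mulrA. Qed.

Lemma dotzDr {k} (u v w : Zk k) : dotz w (u + v) = dotz w u + dotz w v.
Proof. by rewrite dotzC dotzDl !(dotzC w). Qed.

Lemma dotzNr {k} (u w : Zk k) : dotz w (- u) = - dotz w u.
Proof. by rewrite dotzC dotzNl dotzC. Qed.

Lemma dotzZr {k} a (u w : Zk k) : dotz w (a *: u) = a * dotz w u.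
Proof. by rewrite dotzC dotzZl dotzC. Qed.

Lemma sqz_dot {k} (v : Zk k) : sqz v = dotz v v.
Proof. by apply: eq_bigr => i _; rewrite expr2. Qed.

Lemma sqzD {k} (u v : Zk k) : sqz (u + v) = sqz u + 2 * dotz u v + sqz v.
Proof.
rewrite !sqz_dot dotzDl !dotzDr (dotzC v u); ring.
Qed.

Lemma sqzN {k} (u : Zk k) : sqz (- u) = sqz u.
Proof. by rewrite !sqz_dot dotzNl dotzNr opprK. Qed.

Lemma sqzB {k} (u v : Zk k) : sqz (u - v) = sqz u - 2 * dotz u v + sqz v.
Proof. by rewrite sqzD sqzN dotzNr; ring. Qed.

Lemma CSz {k} (u v : Zk k) : dotz u v ^+ 2 <= sqz u * sqz v.
Proof.
have [u0|] := eqVneq (sqz u) 0.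
  have d0 : dotz u v = 0 by rewrite (sqz_eq0 _ u0) /dotz big1 // => i _; rewrite mxE mul0r.
  by rewrite d0 u0 mul0r expr0n.
move=> nz; have pos : 0 < sqz u by rewrite lt_def nz sqz_ge0.
have := sqz_ge0 (dotz u v *: u - sqz u *: v).
rewrite sqzB !sqz_dot !dotzZl !dotzZr -!sqz_dot => h.
have : 0 <= sqz u * (sqz u * sqz v - dotz u v ^+ 2) by rewrite -[X in _ <= X]subr0; lra.
rewrite pmulr_rge0 // subr_ge0 //.
Qed.
Lemma toRB {R : realType} {k} (m c : Zk k) : toR (R:=R) (m - c) = toR m - toR c.
Proof. by apply/rowP => i; rewrite !mxE rmorphB. Qed.

Lemma enorm_toR {R : realType} {k} (v : Zk k) :
  enorm (toR (R:=R) v) = Num.sqrt ((sqz v)%:~R).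
Proof.
rewrite /enorm /sqz rmorph_sum; congr Num.sqrt; apply: eq_bigr => i _.
by rewrite !mxE rmorphXn.
Qed.

Lemma sqrt_le_sqr {R : realType} (a b : R) : 0 <= b -> (Num.sqrt a <= b) = (a <= b ^+ 2).
Proof.
move=> b0; rewrite -{1}(ger0_norm b0) -sqrtr_sqr ler_sqrt //; exact: sqr_ge0.
Qed.

Lemma sqrt_lt_sqr {R : realType} (a b : R) : 0 <= a -> 0 <= b -> (Num.sqrt a < b) = (a < b ^+ 2).
Proof.
move=> a0 b0.
have [->|bn0] := eqVneq b 0; first by rewrite expr0n /= !ltNge sqrtr_ge0 a0.
rewrite -{1}(ger0_norm b0) -sqrtr_sqr.
by rewrite ltr_sqrt // exprn_gt0 // lt_def bn0.
Qed.

Lemma znorm_le {R : realType} {k} (v : Zk k) (r : R) : 0 <= r ->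
  (znorm v <= r) = ((sqz v)%:~R <= r ^+ 2).
Proof. by move=> r0; rewrite /znorm enorm_toR sqrt_le_sqr. Qed.

Lemma znorm_lt {R : realType} {k} (v : Zk k) (L : nat) :
  (znorm (R:=R) v < L%:R) = (sqz v < (L ^ 2)%:Z).
Proof.
rewrite /znorm enorm_toR sqrt_lt_sqr ?ler0z ?sqz_ge0 //.
by rewrite -natrX -[X in _ < X]/((Posz (L^2))%:~R) ltr_int.
Qed.

Lemma enorm_le {R : realType} {k} (m n c : Zk k) :
  (enorm (toR (R:=R) m - toR n) <= enorm (toR (R:=R) m - toR c)) = (sqz (m - n) <= sqz (m - c)).
Proof. by rewrite -!toRB !enorm_toR ler_sqrt ?ler_int // ler0z sqz_ge0. Qed.

Definition Vz {k} (C : set (Zk k)) (n : Zk k) : set (Zk k) :=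
  [set m | forall c, C c -> sqz (m - n) <= sqz (m - c)].
Definition Bz {R : realType} {k} (r : R) (A : set (Zk k)) : set (Zk k) :=
  [set p | (exists a, A a /\ (sqz (p - a))%:~R <= r ^+ 2) /\
           (exists b, ~ A b /\ (sqz (p - b))%:~R <= r ^+ 2)].
Definition sgnb (s : bool) : int := if s then 1 else -1.
Definition Btype {R : realType} {k} (C : set (Zk k)) (n : Zk k) (r : R)
  (i : 'I_k) (s : bool) (p : Zk k) :=
  exists b c, C c /\ (sqz (p - b))%:~R <= r ^+ 2 /\ sqz (b - c) < sqz (b - n) /\
    sqz (c - n) <= k%:Z * (c - n) 0 i ^+ 2 /\ 0 < sgnb s * (c - n) 0 i.

Lemma subBB {k} (m n c : Zk k) : m - c = (m - n) - (c - n).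
Proof. by rewrite opprB addrA subrK. Qed.

Lemma dotz_delta {k} (i : 'I_k) (d : Zk k) : dotz (delta_mx 0 i) d = d 0 i.
Proof.
rewrite /dotz (bigD1 i) //= big1 ?addr0 => [|j ji]; first by rewrite mxE !eqxx mul1r.
by rewrite mxE (negbTE ji) andbF mul0r.
Qed.

Lemma sqz_par {k} (u v : Zk k) : sqz (u + v) <= 2 * sqz u + 2 * sqz v.
Proof. have := sqz_ge0 (u - v); rewrite sqzB sqzD => h; lra. Qed.

Lemma V_small {k} (C : set (Zk k)) n (L : nat) m :
  (forall m, exists c, C c /\ sqz (m - c) < (L ^ 2)%:Z) ->
  Vz C n m -> sqz (m - n) < (L ^ 2)%:Z.
Proof. by move=> hcov Vm; have [c [Cc lt]] := hcov m; exact: le_lt_trans (Vm c Cc) lt. Qed.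

Lemma V_big {k} (C : set (Zk k)) n (L : nat) m :
  (forall c, C c -> c <> n -> (L ^ 2)%:Z <= sqz (c - n)) ->
  4 * sqz (m - n) <= (L ^ 2)%:Z -> Vz C n m.
Proof.
move=> hsep hm c Cc; have [->|cn] := eqVneq c n; first by [].
have hd : (L ^ 2)%:Z <= sqz (c - n) by apply: hsep => // e; rewrite e eqxx in cn.
have := sqz_ge0 ((2 : int) *: (m - n) - (c - n)).
rewrite (subBB m n c); move: hm hd; move: (m - n) (c - n) => w d hm hd.
rewrite !sqzB dotzZl [sqz (_ *: _)]sqz_dot dotzZl dotzZr -sqz_dot => h.
lra.
Qed.

Lemma sq_abs_le (x y : int) : (`|x| <= `|y|)%N -> x ^+ 2 <= y ^+ 2.
Proof. move=> h; rewrite !expr2; nia. Qed.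

Lemma type_exists {R : realType} {k} (C : set (Zk k)) n (r : R) p :
  Bz r (Vz C n) p -> exists i s, Btype C n r i s p.
Proof.
move=> [_ [b [nVb hb]]].
have [c [Cc lt]] : exists c, C c /\ sqz (b - c) < sqz (b - n).
  apply: contra_notP nVb => h c Cc; rewrite leNgt; apply/negP => lt; apply: h; by exists c.
have dn0 : c - n != 0.
  apply/negP => /eqP e; move: lt; have -> : c = n by apply/eqP; rewrite -subr_eq0 e.
  by rewrite ltxx.
have [i0 di0] : exists i, (c - n) 0 i != 0.
  case: (pselect (exists i, (c - n) 0 i != 0)) => // h; exfalso.
  move/negP: dn0; apply; apply/eqP/rowP => j.
  rewrite [RHS]mxE; apply/eqP; case: eqP => // hne; exfalso; apply: h; exists j; exact/eqP.
case: (@arg_maxnP _ i0 xpredT (fun i => absz ((c - n)%R 0 i)) isT) => i _ imax.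
have di : (c - n) 0 i != 0.
  apply: contra di0 => /eqP h; move: (imax i0 isT); rewrite h /= leqn0 absz_eq0 //.
exists i, (0 < (c - n) 0 i), b, c; do 3 (split => //); split.
  have -> : k%:Z * (c - n) 0 i ^+ 2 = \sum_(j < k) (c - n) 0 i ^+ 2.
    by rewrite sumr_const card_ord -mulr_natl natz.
  apply: ler_sum => j _; apply: sq_abs_le; exact: imax.
rewrite /sgnb; case: ifP => h; first by rewrite mul1r.
rewrite mulN1r oppr_gt0 lt_neqAle di /=; move/negbT: h; rewrite -leNgt //.
Qed.

Lemma window {R : realType} {k} (C : set (Zk k)) n (r : R) i s p (t : int) :
  Btype C n r i s p ->
  Bz r (Vz C n) (p + (sgnb s * t) *: delta_mx 0 i) -> 0 <= t ->
  ((t ^+ 2)%:~R : R) < 4 * r ^+ 2 * k%:R.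
Proof.
move=> [b [c [Cc [hb [lt [hk hs]]]]]] [[a2 [Va2 ha2]] _] t0.
have h2 := Va2 c Cc.
set q := p + _ in ha2 h2 *.
pose w := (b - p) + (q - a2).
have hw : w = (b - n) - (a2 - n) + (sgnb s * t) *: delta_mx 0 i.
  by apply/rowP => j; rewrite /w /q !mxE; ring.
have hW : (sqz w)%:~R <= 4 * r ^+ 2 :> R.
  have := sqz_par (b - p) (q - a2); rewrite -/w -(ler_int R) rmorphD /= !rmorphM /=.
  have -> : b - p = - (p - b) by rewrite opprB.
  rewrite sqzN => h; lra.
move: h2 lt; rewrite (subBB a2 n c) (subBB b n c).
have hD : dotz w (c - n) = dotz (b - n) (c - n) - dotz (a2 - n) (c - n) + t * (sgnb s * (c - n) 0 i).
  by rewrite hw !(dotzDl, dotzNl, dotzZl) dotz_delta; ring.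
have CS := CSz w (c - n).
have W0 := sqz_ge0 w.
move: hD CS hk hs hW; move: (c - n) => d; move: (b - n) (a2 - n) => u v.
rewrite !sqzB => hD CS hk hs hW h2 lt.
set g := sgnb s * d 0 i in hD hs.
have g2 : d 0 i ^+ 2 = g ^+ 2 by rewrite /g /sgnb; case: (s) ; rewrite ?mul1r ?mulN1r ?sqrrN.
have e1 : t * g < dotz w d.
  move: hD h2 lt; move: (dotz w d) (dotz u d) (dotz v d) (sqz u) (sqz v) (sqz d) (t * g).
  clear; move=> D a b' su sv sd tg; lra.
have e2 : (t * g) ^+ 2 < dotz w d ^+ 2.
  have tg0 : 0 <= t * g by rewrite mulr_ge0 // ltW.
  rewrite !expr2; nia.
have e3 : dotz w d ^+ 2 <= sqz w * (k%:Z * g ^+ 2).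
  apply: (le_trans CS); rewrite -g2; exact: ler_wpM2l.
have e4 : t ^+ 2 < sqz w * k%:Z.
  have gp : 0 < g ^+ 2 by rewrite exprn_gt0.
  rewrite -(ltr_pM2r gp); move: (lt_le_trans e2 e3); rewrite exprMn mulrA //.
have := e4; rewrite -(ltr_int R) rmorphM /= => h.
apply: (lt_le_trans h); rewrite intrM; apply: ler_wpM2r => //; exact: ler0n.
Qed.

Lemma card_le_inj (T : choiceType) (F : finType) (A : set T) (psi : T -> F) :
  finite_set A -> (forall a b, A a -> A b -> psi a = psi b -> a = b) ->
  (#|` fset_set A| <= #|F|)%N.
Proof.
move=> fA inj.
have e : #|` [fset psi x | x in fset_set A]%fset| = #|` fset_set A|.
  rewrite card_in_imfset //= => a b ha hb; apply: inj; [move: ha|move: hb]; rewrite unfold_in /= => h; have := (h : _ \in fset_set A); rewrite in_fset_set //; exact: set_mem.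
rewrite -e -[#|F|]card_finset; apply: fsubset_leq_card; apply/fsubsetP => x _.
by rewrite in_fset inE.
Qed.

Lemma card_ge_inj (T : choiceType) (F : finType) (A : set T) (e : F -> T) :
  finite_set A -> injective e -> (forall f, A (e f)) ->
  (#|F| <= #|` fset_set A|)%N.
Proof.
move=> fA inj hA.
have E : #|` [fset e x | x in [fset y in F]%fset]%fset| = #|F|.
  by rewrite card_in_imfset //= ?card_finset // => a b _ _; exact: inj.
rewrite -E; apply: fsubset_leq_card; apply/fsubsetP => x; case/imfsetP => y _ ->.
rewrite in_fset_set //; exact: mem_set.
Qed.

Definition emb {k} (n : Zk k) (H : nat) (f : {ffun 'I_k -> 'I_(2 * H).+1}) : Zk k :=
  \row_j (n 0 j + (f j : nat)%:Z - H%:Z).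

Lemma box_finite {k} (n : Zk k) (H : nat) :
  finite_set [set p : Zk k | forall j, - (H%:Z) <= p 0 j - n 0 j <= H%:Z].
Proof.
apply: (sub_finite_set _ (finite_image (emb n H) (@finite_finset _ setT))).
move=> p hp; exists [ffun j => inord (absz (p 0 j - n 0 j + H%:Z))] => //.
apply/rowP => j; have := hp j; rewrite !mxE ffunE => /andP [h1 h2].
rewrite inordK; last by lia.
rewrite gez0_abs; [ring | lia].
Qed.

Lemma coord_lt {k} (v : Zk k) (L : nat) j : sqz v < (L ^ 2)%:Z -> - (L%:Z) < v 0 j < L%:Z.
Proof. have := sqz_coord v j; move: (sqz v) (v 0 j) => s x; rewrite expr2 => h1 h2; apply/andP; split; nia. Qed.

Lemma coord_le {k} (v : Zk k) (L : nat) j : sqz v <= (L ^ 2)%:Z -> - (L%:Z) <= v 0 j <= L%:Z.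
Proof. have := sqz_coord v j; move: (sqz v) (v 0 j) => s x; rewrite expr2 => h1 h2; apply/andP; split; nia. Qed.

Lemma B_near {R : realType} {k} (C : set (Zk k)) n (P : nat) (r : R) p :
  0 < r -> r <= P%:R -> Bz r (Vz C n) p ->
  exists a, Vz C n a /\ sqz (p - a) <= (P ^ 2)%:Z.
Proof.
move=> r0 rP [[a [Va ha]] _]; exists a; split => //.
rewrite -(ler_int R); apply: (le_trans ha).
rewrite -[X in _ <= X]/(((P ^ 2)%N)%:R) natrX lerXn2r // ?nnegrE ?ler0n //; exact: ltW.
Qed.

Lemma V_box {k} (C : set (Zk k)) n (L P : nat) a :
  (forall m, exists c, C c /\ sqz (m - c) < (L ^ 2)%:Z) ->
  Vz C n a -> forall j, - ((L + P)%N%:Z) <= a 0 j - n 0 j <= (L + P)%N%:Z.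
Proof.
move=> hcov Va j; have := coord_lt _ _ j (V_small _ _ _ _ hcov Va); rewrite mxE [in X in X -> _]mxE.
move=> /andP [h1 h2]; rewrite PoszD; move: h1 h2; move: (a 0 j - n 0 j) => x; lia.
Qed.

Lemma B_box {R : realType} {k} (C : set (Zk k)) n (L P : nat) (r : R) p :
  0 < r -> r <= P%:R ->
  (forall m, exists c, C c /\ sqz (m - c) < (L ^ 2)%:Z) ->
  Bz r (Vz C n) p -> forall j, - ((L + P)%N%:Z) <= p 0 j - n 0 j <= (L + P)%N%:Z.
Proof.
move=> r0 rP hcov Bp j; have [a [Va ha]] := B_near _ _ _ _ _ r0 rP Bp.
have := coord_lt _ _ j (V_small _ _ _ _ hcov Va); have := coord_le _ _ j ha.
rewrite !mxE PoszD => /andP [h1 h2] /andP [h3 h4].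
move: h1 h2 h3 h4; move: (p 0 j) (a 0 j) (n 0 j) => x y z; lia.
Qed.

Lemma four_kh2 (k L : nat) : (4 * k * (L %/ (2 * k)) ^ 2 <= L ^ 2)%N.
Proof.
case: k => [|k]; first by rewrite muln0 mul0n.
have := leq_trunc_div L (2 * k.+1); move: (L %/ _)%N => h hl.
have : ((h * (2 * k.+1)) ^ 2 <= L ^ 2)%N by rewrite leq_exp2r.
nia.
Qed.

Lemma V_lower {k} (C : set (Zk k)) n (L : nat) :
  (forall c, C c -> c <> n -> (L ^ 2)%:Z <= sqz (c - n)) -> finite_set (Vz C n) ->
  ((2 * (L %/ (2 * k))).+1 ^ k <= #|` fset_set (Vz C n)|)%N.
Proof.
move=> hsep fV; have := four_kh2 k L; move: (L %/ (2 * k))%N => h hh.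
pose e (f : {ffun 'I_k -> 'I_(2 * h).+1}) : Zk k := \row_j (n 0 j + (f j : nat)%:Z - h%:Z).
have -> : ((2 * h).+1 ^ k)%N = #|{ffun 'I_k -> 'I_(2 * h).+1}| by rewrite card_ffun !card_ord.
apply: (@card_ge_inj _ _ _ e) => // [f g efg | f].
  apply/ffunP => j; apply/val_inj; have := congr1 (fun v : Zk k => v 0 j) efg.
  by rewrite /e !mxE => /addIr/addrI [].
apply: (V_big _ _ _ _ hsep).
have hj : forall j, (e f - n) 0 j ^+ 2 <= (h ^ 2)%N%:Z.
  move=> j; rewrite /e !mxE; have := ltn_ord (f j); move: (nat_of_ord (f j)) => x hx.
  have -> : n 0 j + x%:Z - h%:Z - n 0 j = x%:Z - h%:Z by ring.
  rewrite -[Posz (h ^ 2)%N]natz natrX natz expr2; move: hx; clear; nia.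
have : sqz (e f - n) <= (k * h ^ 2)%N%:Z.
  have -> : (k * h ^ 2)%N%:Z = \sum_(j < k) (h ^ 2)%N%:Z.
    by rewrite sumr_const card_ord -mulr_natr natz PoszM mulrC.
  by apply: ler_sum => j _; exact: hj.
move=> hs; have : (4 * (k * h ^ 2))%N%:Z <= (L ^ 2)%N%:Z by rewrite lez_nat mulnA.
rewrite PoszM; move: hs; move: (sqz _) (Posz (k * h ^ 2)%N) (Posz (L ^ 2)%N) => a b c.
clear; lia.
Qed.

Lemma t_bound {R : realType} (r : R) (P k : nat) (t : int) :
  0 < r -> r <= P%:R -> 0 <= t -> (t ^+ 2)%:~R < 4 * r ^+ 2 * k.+1%:R ->
  t < (2 * P * k.+1)%N%:Z.
Proof.
move=> r0 rP t0 h.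
have h2 : (t ^+ 2)%:~R < ((2 * P * k.+1)%N%:Z ^+ 2)%:~R :> R.
  apply: (lt_le_trans h); rewrite rmorphXn /= -[((2 * P * k.+1)%N%:Z)%:~R]/(((2 * P * k.+1)%N)%:R : R).
  rewrite !natrM.
  have k1 : (1 : R) <= k.+1%:R by rewrite ler1n.
  have rP2 : r ^+ 2 <= P%:R ^+ 2 by rewrite lerXn2r // ?nnegrE ?ler0n // ltW.
  have c0 : 0 <= r ^+ 2 by exact: sqr_ge0.
  move: rP2 k1 c0; move: (P%:R : R) (k.+1%:R : R) (r ^+ 2) => a b c; rewrite !expr2 => h1 h2 h3.
  nra.
move: h2; rewrite ltr_int => h3.
have T0 : 0 <= (2 * P * k.+1)%N%:Z by [].
move: h3 T0; move: (Posz _) => T; rewrite !expr2 => h3 T0; nia.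
Qed.

Lemma modeq (a a' T : nat) : (a %% T = a' %% T)%N -> (a' < a + T)%N -> (a < a' + T)%N -> a = a'.
Proof.
wlog le : a a' / (a <= a')%N.
  move=> W h1 h2 h3; case: (leqP a a') => [l|l]; first exact: W.
  by symmetry; apply: W => //; exact: ltnW.
move=> h1 h2 _; have [d ed] : exists d, a' = (a + d)%N by exists (a' - a)%N; lia.
subst a'; move: h1; rewrite -{1}(addn0 a) => /eqP; rewrite eqn_modDl mod0n modn_small; lia.
Qed.

Lemma sgnb2 s : sgnb s * sgnb s = 1.
Proof. by case: s; rewrite /sgnb ?mulr1 ?mulrNN ?mulr1. Qed.

Lemma B_upper {R : realType} {k} (C : set (Zk k)) n (L P : nat) (r : R) :
  0 < r -> r <= P%:R -> (0 < P)%N ->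
  (forall m, exists c, C c /\ sqz (m - c) < (L ^ 2)%:Z) ->
  finite_set (Bz r (Vz C n)) ->
  (#|` fset_set (Bz r (Vz C n))| <= k * 2 * (2 * (L + P)).+1 ^ k.-1 * (2 * P * k))%N.
Proof.
move=> r0 rP P0.
case: k C n => [|k] C n hcov fB.
  rewrite (_ : Bz _ _ = set0) ?fset_set0 ?cardfs0 //; apply/seteqP; split=> p // /type_exists.
  by move=> [[]].
set H := (L + P)%N; set T := (2 * P * k.+1)%N.
have T0 : (0 < T)%N by rewrite /T !muln_gt0 P0.
pose tp (p : Zk k.+1) : 'I_k.+1 * bool :=
  xget (ord0, false) [set z | Btype C n r z.1 z.2 p].
have tpP : forall p, Bz r (Vz C n) p -> Btype C n r (tp p).1 (tp p).2 p.
  move=> p Bp; have [i [s h]] := type_exists _ _ _ _ Bp.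
  exact: (@xgetPex _ (ord0, false) [set z | Btype C n r z.1 z.2 p] (ex_intro _ (i, s) h)).
pose cd (p : Zk k.+1) (j : 'I_k.+1) : nat := absz (p 0 j - n 0 j + H%:Z).
have cdE : forall p j, Bz r (Vz C n) p -> (cd p j)%:Z = p 0 j - n 0 j + H%:Z /\ (cd p j < (2 * H).+1)%N.
  move=> p j Bp; have := B_box _ _ _ _ _ _ r0 rP hcov Bp j; rewrite -/H => /andP [h1 h2].
  rewrite /cd gez0_abs; last by lia.
  by split => //; lia.
pose psi (p : Zk k.+1) : ('I_k.+1 * bool) * ({ffun 'I_k -> 'I_(2 * H).+1} * 'I_T) :=
  (tp p, ([ffun j => inord (cd p (lift (tp p).1 j))], Ordinal (ltn_pmod (cd p (tp p).1) T0))).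
apply: (leq_trans (@card_le_inj _ _ _ psi fB _)); last first.
  by rewrite !card_prod card_ffun !card_ord card_bool mulnA.
move=> p p' Bp Bp' E; have etp := f_equal fst E; have ecoord := f_equal (fun z => z.2.1) E; have eres := f_equal (fun z => nat_of_ord z.2.2) E; rewrite /psi /= in etp ecoord eres; clear E.
move: ecoord eres; rewrite -etp => ecoord eres.
have tP := tpP p Bp; have tP' := tpP p' Bp'; rewrite -etp in tP'.
move: (tp p) tP tP' ecoord eres => [i s] /= tP tP' ecoord eres.
have ec : forall j, j != i -> p' 0 j = p 0 j.
  move=> j; case: (unliftP i j) => [j' ->|->]; last by rewrite eqxx.
  move=> _; have := congr1 (fun f : {ffun 'I_k -> 'I_(2 * H).+1} => f j') ecoord; rewrite !ffunE.
  have [c1 l1] := cdE p (lift i j') Bp; have [c2 l2] := cdE p' (lift i j') Bp'.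
  move/(congr1 val); rewrite /= !inordK // => e.
  by move: c1 c2; rewrite e => -> /addIr/addIr.
set d := p' 0 i - p 0 i.
have ep' : p' = p + d *: delta_mx 0 i.
  apply/rowP => j; rewrite !mxE; have [->|ji] := eqVneq j i.
    by rewrite !eqxx mulr1 /d addrC subrK.
  by rewrite andbF mulr0 addr0 ec.
have [c1 l1] := cdE p i Bp; have [c2 l2] := cdE p' i Bp'.
suff : `|d| < T%:Z.
  move=> hd; move: hd; rewrite ltr_norml => /andP [hd1 hd2].
  have e : cd p i = cd p' i.
    apply: (@modeq _ _ T) => //.
      have : (cd p' i)%:Z < (cd p i)%:Z + T%:Z.
        rewrite c1 c2; move: hd1 hd2; rewrite /d; move: (p' 0 i) (p 0 i) (n 0 i) (Posz H) (Posz T) => a b c h t; lia.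
      by rewrite -PoszD ltz_nat.
    have : (cd p i)%:Z < (cd p' i)%:Z + T%:Z.
      rewrite c1 c2; move: hd1 hd2; rewrite /d; move: (p' 0 i) (p 0 i) (n 0 i) (Posz H) (Posz T) => a b c h t; lia.
    by rewrite -PoszD ltz_nat.
  have d0 : d = 0 by move: c1 c2; rewrite e /d => -> /addIr/addIr ->; rewrite subrr.
  by rewrite ep' d0 scale0r addr0.
set t := sgnb s * d.
have dt : d = sgnb s * t by rewrite /t mulrA sgnb2 mul1r.
have nd : `|d| = `|t| by rewrite /t normrM; case: (s); rewrite /sgnb ?normrN normr1 mul1r.
rewrite nd; have [t0|t0] := leP 0 t.
  rewrite ger0_norm //.
  have Bq : Bz r (Vz C n) (p + (sgnb s * t) *: delta_mx 0 i) by rewrite -dt -ep'.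
  exact: (t_bound _ _ _ _ r0 rP t0 (window _ _ _ _ _ _ _ tP Bq t0)).
rewrite ltr0_norm //; apply: (t_bound _ _ _ _ r0 rP); first by rewrite oppr_ge0 ltW.
have Bq : Bz r (Vz C n) (p' + (sgnb s * - t) *: delta_mx 0 i).
  by rewrite ep' mulrN -dt scaleNr addrK.
apply: (window _ _ _ _ _ _ _ tP' Bq); rewrite oppr_ge0 ltW //.
Qed.
Local Open Scope nat_scope.
Lemma leq_expn (e m n : nat) : m <= n -> m ^ e <= n ^ e.
Proof. by case: e => [//|e] h; rewrite leq_exp2r. Qed.

Lemma arith2 (k P L A : nat) : 0 < P -> P <= L ->
  2 * k.+1 * (A * (10 * k.+1) ^ k) <= L ->
  A * (2 * (L + P)).+1 ^ k <= (2 * (L %/ (2 * k.+1))).+1 ^ k.+1.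
Proof.
move=> P0 PL hQ0.
move: (ltn_ceil L (isT : 0 < 2 * k.+1)) => hc.
move: hc; move: (L %/ (2 * k.+1)) => h hc.
have hL : L < 2 * k.+1 * (2 * h).+1.
  apply: (leq_trans hc); rewrite mulnC leq_mul2l; apply/orP; right; lia.
move: hL; move: (2 * h).+1 => M hL.
have hQ : A * (10 * k.+1) ^ k < M.
  have : 2 * k.+1 * (A * (10 * k.+1) ^ k) < 2 * k.+1 * M by apply: leq_ltn_trans hL.
  by rewrite ltn_mul2l.
have hN : (2 * (L + P)).+1 <= 10 * k.+1 * M.
  move: hL PL P0; rewrite -!mulnA; move: (k.+1 * M) => KM; clear; lia.
have hp := leq_expn k _ _ hN.
apply: (@leq_trans (A * (10 * k.+1 * M) ^ k)); first by rewrite leq_mul2l hp orbT.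
rewrite expnMn mulnA expnS leq_mul2r; apply/orP; right; exact: ltnW.
Qed.

Lemma arith_final (k P L : nat) : 0 < P -> P <= L ->
  2 * k * ((P * (k * 2 * (2 * P * k))) * (10 * k) ^ k.-1) <= L ->
  P * (k * 2 * (2 * (L + P)).+1 ^ k.-1 * (2 * P * k)) <= (2 * (L %/ (2 * k))).+1 ^ k.
Proof.
case: k => [|k]; first by rewrite !muln0.
move=> P0 PL h /=; have := arith2 _ _ _ _ P0 PL h.
rewrite (_ : P * (k.+1 * 2 * (2 * (L + P)).+1 ^ k * (2 * P * k.+1)) =
  P * (k.+1 * 2 * (2 * P * k.+1)) * (2 * (L + P)).+1 ^ k) //.
by move: (_ ^ k) => X; nia.
Qed.
Local Open Scope ring_scope.

Theorem lemma3p5 (R : realType) (k : nat) (Z : pseudoMetricType R)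
  (S : Zk k -> Z -> Z) :
  compact [set: Z] -> hausdorff_space Z ->
  is_action S -> free_action S -> zero_dim Z ->
  forall r : R, 0 < r ->
  exists L0 : R, 0 < L0 /\
  forall (L : nat) (U : set Z), (0 < L)%N -> L0 <= L%:R -> clopen U ->
    (forall z : Z, exists n : Zk k, znorm (R:=R) n < L%:R /\ (S n @` U) z) ->
    (forall n : Zk k, 0 < znorm (R:=R) n < L%:R -> U `&` (S n @` U) = set0) ->
    forall (x : Z) (n : Zk k), Cset S U x n ->
      let V := VcellZ R S U x n in
      let B := bdryZ r V in
      finite_set V /\ finite_set B /\
      ((#|` fset_set B|)%fset%:R / (#|` fset_set V|)%fset%:R < r^-1).
Proof.
move=> _ _ [act0 [actD _]] _ _ r r0.
pose P := (Num.Def.trunc r).+1.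
have rP : r < P%:R by exact: truncnS_gt.
have P0 : (0 < P)%N by [].
pose L0n := (P + 2 * k * ((P * (k * 2 * (2 * P * k))) * (10 * k) ^ k.-1)).+1.
exists (L0n%:R); split; first by rewrite ltr0n.
move=> L U L0 hL0 _ hcovU hdis x n Cn V B.
have hLn : (L0n <= L)%N by rewrite -(ler_nat R).
pose C := Cset S U x.
have hsep : forall c, C c -> c <> n -> (L ^ 2)%:Z <= sqz (c - n).
  move=> c Cc cn; rewrite leNgt; apply/negP => lt.
  have nz : 0 < znorm (R:=R) (c - n).
    rewrite /znorm enorm_toR sqrtr_gt0 ltr0z lt_def sqz_ge0 andbT.
    apply/eqP => /sqz_eq0 /eqP; rewrite subr_eq0 => /eqP; exact: cn.
  have hd := hdis (c - n); rewrite nz znorm_lt lt in hd; have {}hd := hd isT.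
  have : (U `&` (S (c - n) @` U)) (S c x).
    split; first exact: Cc.
    by exists (S n x) => //; rewrite -actD subrK.
  by rewrite hd.
have hcov : forall m, exists c, C c /\ sqz (m - c) < (L ^ 2)%:Z.
  move=> m; have [v [hv [u Uu e]]] := hcovU (S m x).
  exists (m - v); split; last by rewrite opprB addrC subrK -(znorm_lt (R:=R)).
  rewrite /C /Cset /=.
  by rewrite addrC actD -e -actD addNr act0.
have hV : V = Vz C n.
  by apply/seteqP; split => m /= hm c Cc; [rewrite -(enorm_le (R:=R)) | rewrite enorm_le]; exact: hm.
have hB : B = Bz r (Vz C n).
  rewrite /B hV; apply/seteqP; split => p /= [[a [Va ha]] [b [Vb hb]]]; split;
    [exists a | exists b | exists a | exists b]; split => //.
  all: try by rewrite znorm_le ?(ltW r0).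
  - by move: ha; rewrite znorm_le // ltW.
  - by move: hb; rewrite znorm_le // ltW.
rewrite hB hV.
have PL : (P <= L)%N by apply: leq_trans hLn; rewrite /L0n; apply: leqW; exact: leq_addr.
have fV : finite_set (Vz C n).
  apply: sub_finite_set (box_finite n (L + P)) => m Vm j.
  exact: (V_box _ _ _ _ _ hcov Vm).
have fB : finite_set (Bz r (Vz C n)).
  apply: sub_finite_set (box_finite n (L + P)) => p Bp j.
  exact: (B_box _ _ _ _ _ _ r0 (ltW rP) hcov Bp).
split => //; split => //.
have hup := B_upper _ _ _ _ _ r0 (ltW rP) P0 hcov fB.
have hlow := V_lower _ _ _ hsep fV.
have har : (P * (k * 2 * (2 * (L + P)).+1 ^ k.-1 * (2 * P * k)) <= (2 * (L %/ (2 * k))).+1 ^ k)%N.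
  apply: arith_final => //; apply: leq_trans hLn; rewrite /L0n; apply: leqW; exact: leq_addl.
move: hup hlow har.
move: (#|` fset_set (Bz r (Vz C n))|)%fset (#|` fset_set (Vz C n)|)%fset => nb nv.
move: (k * 2 * _ * _)%N ((2 * (L %/ (2 * k))).+1 ^ k)%N (expn_gt0 (2 * (L %/ (2 * k))).+1 k) => X M M0 h1 h2 h3.
have nv0 : (0 < nv)%N by apply: leq_trans h2.
have key : r * nb%:R < nv%:R.
  have [->|nb0] := eqVneq nb 0%N; first by rewrite mulr0 ltr0n.
  apply: (lt_le_trans (y := P%:R * nb%:R)).
    by rewrite ltr_pM2r // ltr0n lt0n.
  rewrite -natrM ler_nat; apply: leq_trans h2; apply: leq_trans h3.
  by rewrite leq_mul2l h1 orbT.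
rewrite ltr_pdivrMr ?ltr0n //; rewrite -(ltr_pM2l r0) mulrA mulfV ?gt_eqF // mul1r //.
Qed.
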